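(* Let $p\in]1,+\infty[$ and set $q=2$ if $p\in]1,2]$, $q=2(p-1)$ if $p\ge2$. Consider the implicit scheme $\frac{\mathbf u^k-\mathbf u^{k-1}}{\tau_{k-1}}=-\Delta_p^{\mathbf K}\mathbf u^k+\mathbf f^k$, $k\in[N]$, $\mathbf u^0=\mathbf g$, with step sizes $\tau_{k-1}>0$. Assume $I_n\mathbf K$ is nonnegative, measurable, symmetric with $\sup_x\int I_n\mathbf K(x,y)dy<\infty$; $I_n\mathbf g\in L^{\max(p,q)}(\Omega)$ with $\sup_n\|I_n\mathbf g\|_{L^q(\Omega)}<\infty$; $\bar f_n\in L^1([0,T];L^{\max(p,q)}(\Omega))$ with $\sup_n\|\bar f_n\|_{L^1([0,T];L^q(\Omega))}<\infty$. Assume in addition $\sup_n\|I_n\mathbf K\|_{L^{\infty,1}(\Omega^2)}<+\infty$ and $\sup_n\|\bar f_n\|_{\mathrm{BV}([0,T];L^2(\Omega))}<+\infty$. Then $\sup_{t\in[0,T],n\in\mathbb N}\|\tilde u_n(\cdot,t)-\bar u_n(\cdot,t)\|_{L^2(\Omega)}\le C\tau$, where $C>0$ does not depend on $(n,N,T)$.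
   Context: $d\ge1$, $\Omega=[0,1]^d$, hypercubic cells $\Omega^n_{\mathbf i}$ of measures $h_{\mathbf i}$, $I_n$ the piecewise-constant injector. $\Psi(s)=|s|^{p-2}s$; $(\Delta_p^{\mathbf K}\mathbf u)_{\mathbf i}=-\sum_{\mathbf j}h_{\mathbf j}\mathbf K_{\mathbf i\mathbf j}\Psi(\mathbf u_{\mathbf j}-\mathbf u_{\mathbf i})$. Time partition $0=t_0<\dots<t_N=T$, $\tau_{k-1}=t_k-t_{k-1}$, $\tau=\max\tau_{k-1}$. With $u_n^k=I_n\mathbf u^k$, $f_n^k=I_n\mathbf f^k$: for $t\in]t_{k-1},t_k]$, $\tilde u_n(x,t)=\frac{t_k-t}{\tau_{k-1}}u_n^{k-1}(x)+\frac{t-t_{k-1}}{\tau_{k-1}}u_n^k(x)$, $\bar u_n(x,t)=u_n^k(x)$, $\bar f_n(x,t)=f_n^k(x)$. $\|F\|_{L^{\infty,1}(\Omega^2)}=\sup_x\int|F(x,y)|dy$. For $h:\Omega\times[0,T]\to\mathbb R$, $\mathrm{Var}_2(h)=\sup_{0\le s_0<\dots<s_M\le T}\sum_i\|h(\cdot,s_i)-h(\cdot,s_{i-1})\|_{L^2(\Omega)}$ and $\|h\|_{\mathrm{BV}([0,T];L^2(\Omega))}=\|h(\cdot,0)\|_{L^2(\Omega)}+\mathrm{Var}_2(h)$. *)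

(* Defs.v *)
From HB Require Import structures.
From mathcomp Require Import all_boot all_order all_algebra.
From mathcomp Require Import all_classical all_reals all_analysis.
Set Implicit Arguments. Unset Strict Implicit. Unset Printing Implicit Defensive.
Import Order.TTheory GRing.Theory Num.Theory.
Local Open Scope ring_scope.

Section Defs.
Variable R : realType.

Definition Psi (p s : R) : R := `|s| `^ (p - 2) * s.

Definition qexp (p : R) : R := if p <= 2 then 2 else 2 * (p - 1).

Variable I : finType.   (* index set of the cells Omega^n_i *)
Variable h : I -> R.    (* h i = measure of the cell Omega^n_i *)

(* || I_n v ||_{L^r(Omega)} for a grid function v (piecewise constant) *)
Definition Lnorm_n (r : R) (v : I -> R) : R :=
  (\sum_i h i * `|v i| `^ r) `^ r^-1.

(* || I_n K ||_{L^{oo,1}(Omega^2)} = sup_x int |I_n K(x,y)| dy *)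
Definition Linf1_n (K : I -> I -> R) : R :=
  \big[Num.max/0]_i \sum_j h j * `|K i j|.

Definition plap (p : R) (K : I -> I -> R) (u : I -> R) (i : I) : R :=
  - \sum_j h j * K i j * Psi p (u j - u i).

(* index k such that s in ]t_{k-1}, t_k]  (k = 1 for s = t_0 = 0) *)
Definition kidx (t : nat -> R) (N : nat) (s : R) : nat :=
  (1 + \sum_(1 <= j < N) nat_of_bool (t j < s)%R)%N.

Definition taumax (t : nat -> R) (N : nat) : R :=
  \big[Num.max/0]_(k < N) (t k.+1 - t k).

(* bar u_n(., s) = u^k,  bar f_n(., s) = f^k  for s in ]t_{k-1},t_k] *)
Definition tbar (u : nat -> I -> R) (t : nat -> R) (N : nat) (s : R) : I -> R :=
  u (kidx t N s).

Definition ttilde (u : nat -> I -> R) (t : nat -> R) (N : nat) (s : R) : I -> R :=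
  fun i => let k := kidx t N s in
    (t k - s) / (t k - t k.-1) * u k.-1 i + (s - t k.-1) / (t k - t k.-1) * u k i.

Definition Var2 (T : R) (F : R -> I -> R) : \bar R :=
  ereal_sup [set x : \bar R | exists (M : nat) (s : nat -> R),
     [/\ 0 <= s 0%N, (forall i, (i < M)%N -> s i < s i.+1), s M <= T &
         x = (\sum_(1 <= i < M.+1) Lnorm_n 2 (fun j => F (s i) j - F (s i.-1) j))%:E]].

Definition BVnorm (T : R) (F : R -> I -> R) : \bar R :=
  ((Lnorm_n 2 (F 0))%:E + Var2 T F)%E.

End Defs.

(* Main.v *)
Require Import Defs.
From HB Require Import structures.
From mathcomp Require Import all_boot all_order all_algebra.
From mathcomp Require Import all_classical all_reals all_analysis.
From mathcomp Require Import ring lra.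
Import Order.TTheory GRing.Theory Num.Theory.
Local Open Scope ring_scope.
Lemma tmono {R : realType} {t : nat -> R} {N : nat} :
  (forall k, (k < N)%N -> t k < t k.+1) ->
  forall i j, (i < j)%N -> (j <= N)%N -> t i < t j.
Proof.
move=> ht i j; elim: j => [//|j IH] ij jN.
rewrite ltnS leq_eqVlt in ij; case/orP: ij => [/eqP ->|ij]; first exact: ht.
apply: lt_trans (IH ij (ltnW jN)) (ht _ jN).
Qed.

Lemma tmonoW {R : realType} {t : nat -> R} {N : nat} :
  (forall k, (k < N)%N -> t k < t k.+1) ->
  forall i j, (i <= j)%N -> (j <= N)%N -> t i <= t j.
Proof.
move=> ht i j; rewrite leq_eqVlt => /orP[/eqP -> //|ij] jN.
by apply/ltW; apply: (tmono ht).
Qed.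

Lemma kidx_eq {R : realType} {t : nat -> R} {N : nat} (k : nat) (s : R) :
  (1 <= k <= N)%N ->
  (forall j, (1 <= j < N)%N -> (t j < s) = (j < k)%N) ->
  kidx t N s = k.
Proof.
move=> /andP[k1 kN] H; rewrite /kidx.
rewrite (eq_big_nat _ _ (F2 := fun j => nat_of_bool (j < k)%N)); last first.
  by move=> j /H ->.
rewrite (big_cat_nat _ (n := k)) //=.
rewrite [X in (_ + (_ + X))%N]big_nat_cond [X in (_ + (_ + X))%N]big1; last first.
  by move=> j /andP[/andP[kj _] _]; rewrite ltnNge kj.
rewrite addn0 (eq_big_nat _ _ (F2 := fun _ => 1%N)); last first.
  by move=> j /andP[_ ->].
rewrite big_const_nat iter_addn_0 mul1n.
by rewrite subnKC.
Qed.

Lemma kidx_itv {R : realType} {t : nat -> R} {N : nat} (k : nat) (s : R) :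
  (forall k, (k < N)%N -> t k < t k.+1) ->
  (1 <= k <= N)%N -> t k.-1 <= s <= t k -> (k = 1%N \/ t k.-1 < s) ->
  kidx t N s = k.
Proof.
move=> ht kk /andP[s1 s2] hk; apply: kidx_eq => // j /andP[j1 jN].
case/andP: kk => k1 kN.
case: (ltnP j k) => jk.
  apply/idP; case: hk => [k1'|hs]; first by move: jk; rewrite k1' ltnS leqNgt j1.
  apply: le_lt_trans hs; apply: (tmonoW ht); last by rewrite (leq_trans _ kN) // leq_pred.
  by rewrite -ltnS prednK.
apply/negbTE; rewrite -leNgt; apply: le_trans s2 _.
exact: (tmonoW ht) jk (ltnW jN).
Qed.

Lemma kidx_ex {R : realType} {t : nat -> R} {N : nat} (s : R) :
  (forall k, (k < N)%N -> t k < t k.+1) -> (0 < N)%N -> t 0%N = 0 ->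
  0 <= s <= t N ->
  exists k, [/\ (1 <= k <= N)%N, t k.-1 <= s <= t k & (k = 1%N \/ t k.-1 < s)].
Proof.
move=> ht N0 t0 /andP[s0 sN].
have ex : exists k, (s <= t k) && (k <= N)%N by exists N; rewrite sN leqnn.
pose k := ex_minn ex.
have [k0 [/andP[sk kN] kmin]] : exists k0, [/\ (s <= t k0) && (k0 <= N)%N &
   forall m, (s <= t m) && (m <= N)%N -> (k0 <= m)%N].
  by exists k; rewrite /k; case: ex_minnP.
case: k0 sk kN kmin => [|k0] sk kN kmin.
  exists 1%N; split => //.
    by rewrite /= t0 s0 /=; apply: le_trans sk _; apply: ltW; exact: ht.
  by left.
exists k0.+1; split => //=; last by right; rewrite ltNge; apply/negP => H;
  have := kmin k0; rewrite H (ltnW kN) /= => /(_ isT); rewrite ltnn.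
rewrite sk andbT; rewrite leNgt; apply/negP => H.
by have := kmin k0; rewrite (ltW H) (ltnW kN) /= => /(_ isT); rewrite ltnn.
Qed.
Lemma powR_m1 {R : realType} (x r : R) : 0 <= x -> 1 < r ->
  x `^ (r - 2) * x = x `^ (r - 1).
Proof.
move=> x0 r1; rewrite mulrC (_ : r - 2 = (r - 1) - 1); last by ring.
by rewrite mulr_powRB1 // subr_gt0.
Qed.

Lemma norm_Psi {R : realType} (p x : R) : 1 < p -> `|Psi p x| = `|x| `^ (p - 1).
Proof.
move=> p1; rewrite /Psi normrM ger0_norm ?powR_ge0 //.
by rewrite powR_m1.
Qed.

Lemma Psi_self {R : realType} (q x : R) : 1 < q -> Psi q x * x = `|x| `^ q.
Proof.
move=> q1; rewrite /Psi -mulrA -expr2 -real_normK ?num_real // expr2 mulrA.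
rewrite powR_m1 // mulrC mulr_powRB1 //; lra.
Qed.

Lemma PsiN {R : realType} (p x : R) : Psi p (- x) = - Psi p x.
Proof. by rewrite /Psi normrN mulrN. Qed.

Lemma Psi_ge0 {R : realType} (p x : R) : 1 < p -> 0 <= x -> Psi p x = x `^ (p - 1).
Proof. by move=> p1 x0; rewrite /Psi ger0_norm // powR_m1. Qed.

Lemma Psi_lt0 {R : realType} (p x : R) : 1 < p -> x < 0 -> Psi p x = - (`|x| `^ (p - 1)).
Proof.
move=> p1 x0; rewrite -[in LHS](opprK x) PsiN Psi_ge0 //; last by rewrite oppr_ge0 ltW.
by rewrite ltr0_norm.
Qed.

Lemma Psi_mono {R : realType} (q a b : R) : 1 < q -> a <= b -> Psi q a <= Psi q b.
Proof.
move=> q1 ab.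
have q0 : 0 <= q - 1 by lra.
case: (leP 0 a) => a0.
  rewrite !Psi_ge0 //; last exact: le_trans ab.
  by apply: ge0_ler_powR => //; rewrite nnegrE //; apply: le_trans ab.
rewrite (Psi_lt0 _ _ q1 a0).
case: (leP 0 b) => b0.
  rewrite Psi_ge0 //; apply: le_trans (powR_ge0 _ _); rewrite oppr_le0 powR_ge0 //.
rewrite (Psi_lt0 _ _ q1 b0) lerN2; apply: ge0_ler_powR => //; rewrite ?nnegrE //.
by rewrite !ltr0_norm // lerN2.
Qed.

Lemma Psi_cross {R : realType} (p q a b : R) : 1 < p -> 1 < q ->
  (Psi q a - Psi q b) * Psi p (b - a) <= 0.
Proof.
move=> p1 q1; rewrite {2}/Psi mulrCA.
apply: mulr_ge0_le0; first exact: powR_ge0.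
case: (leP a b) => ab.
  apply: mulr_le0_ge0; first by rewrite subr_le0 Psi_mono.
  by rewrite subr_ge0.
apply: mulr_ge0_le0; first by rewrite subr_ge0 Psi_mono // ltW.
by rewrite subr_le0 ltW.
Qed.

Lemma qexp_ge2 {R : realType} (p : R) : 1 < p -> 2 <= qexp p.
Proof. move=> p1; rewrite /qexp; case: ifP => // /negbT; rewrite -ltNge => ?; lra. Qed.

Lemma qexp_ge {R : realType} (p : R) : 1 < p -> 2 * (p - 1) <= qexp p.
Proof. move=> p1; rewrite /qexp; case: ifP => // H; lra. Qed.

Lemma pow_bound {R : realType} (p y : R) : 1 < p -> 0 <= y ->
  (y `^ (p - 1)) ^+ 2 <= 1 + y `^ qexp p.
Proof.
move=> p1 y0; rewrite expr2 -powRD; last by apply/implyP => /eqP; lra.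
have e0 : 0 < p - 1 + (p - 1) by lra.
have := powR_ge0 y (qexp p); have := powR_ge0 y (p - 1 + (p - 1)); move=> ? ?.
case: (leP y 1) => y1.
  suff : y `^ (p - 1 + (p - 1)) <= 1 by lra.
  move: y0; rewrite le_eqVlt => /orP[/eqP <-|y0].
    by rewrite powR0 ?gt_eqF.
  rewrite -[X in _ <= X](powRr0 y); apply: ger_powR; [by rewrite y0 y1 | exact: ltW e0].
suff : y `^ (p - 1 + (p - 1)) <= y `^ qexp p by lra.
apply: ler_powR; first exact: ltW.
have := qexp_ge _ p1; lra.
Qed.

Lemma diff_pow {R : realType} (q a b : R) : 0 <= q ->
  `|a - b| `^ q <= 2 `^ q * (`|a| `^ q + `|b| `^ q).
Proof.
move=> q0; pose m := Num.max `|a| `|b|.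
have m0 : 0 <= m by rewrite le_max normr_ge0.
have : `|a - b| <= 2 * m.
  apply: le_trans (ler_normB _ _) _.
  by rewrite mulr2n mulrDl mul1r lerD // ?le_max lexx ?orbT.
move=> H; apply: le_trans (ge0_ler_powR q0 _ _ H) _; rewrite ?nnegrE //.
  by apply: mulr_ge0.
rewrite powRM //; apply: ler_wpM2l; first exact: powR_ge0.
have := powR_ge0 `|a| q; have := powR_ge0 `|b| q; move=> ? ?.
rewrite /m; case: (leP `|a| `|b|) => Hab; lra.
Qed.
Lemma sum_mul_sum {R : realType} {J : finType} (F G : J -> R) :
  (\sum_j F j) * (\sum_l G l) = \sum_j \sum_l F j * G l.
Proof. by rewrite mulr_suml; apply: eq_bigr => j _; rewrite mulr_sumr. Qed.

Lemma cauchy_schwarz {R : realType} {J : finType} (w a : J -> R) :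
  (forall j, 0 <= w j) ->
  (\sum_j w j * a j) ^+ 2 <= (\sum_j w j) * (\sum_j w j * a j ^+ 2).
Proof.
move=> w0.
have H : 0 <= \sum_j \sum_l w j * w l * (a j - a l) ^+ 2.
  apply: sumr_ge0 => j _; apply: sumr_ge0 => l _.
  by rewrite mulr_ge0 ?sqr_ge0 // mulr_ge0.
have E : \sum_j \sum_l w j * w l * (a j - a l) ^+ 2 =
   \sum_j \sum_l (w j * a j ^+ 2) * w l + \sum_j \sum_l w j * (w l * a l ^+ 2)
   - 2 * \sum_j \sum_l (w j * a j) * (w l * a l).
  rewrite mulr_sumr -big_split -sumrB; apply: eq_bigr => j _.
  rewrite mulr_sumr -big_split -sumrB; apply: eq_bigr => l _.
  rewrite /=; ring.
rewrite E -!sum_mul_sum in H.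
rewrite expr2; set W := \sum_j w j in H *; set Q := \sum_j w j * a j ^+ 2 in H *.
set S := \sum_j w j * a j in H *.
have : 0 <= Q * W + W * Q - 2 * (S * S) by [].
move=> H'; nra.
Qed.

Lemma powR_div {R : realType} (a A P : R) : 0 <= a -> 0 < A ->
  (a / A) `^ P = a `^ P / A `^ P.
Proof.
move=> a0 A0.
have -> : a `^ P = (A * (a / A)) `^ P by rewrite mulrCA mulfV ?gt_eqF // mulr1.
rewrite [(A * _) `^ _]powRM; last 2 first; [exact: ltW A0 | exact: divr_ge0 a0 (ltW A0) |].
by rewrite mulrAC mulfV ?mul1r // gt_eqF // powR_gt0.
Qed.

Lemma powR_inv_pow {R : realType} (S P : R) : 0 <= S -> 0 < P ->
  (S `^ P^-1) `^ P = S.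
Proof. by move=> S0 P0; rewrite -powRrM mulVf ?gt_eqF // powRr1. Qed.

Lemma hoelder_fin {R : realType} {J : finType} (h a b : J -> R) (P Q : R) :
  (forall j, 0 <= h j) -> (forall j, 0 <= a j) -> (forall j, 0 <= b j) ->
  0 < P -> 0 < Q -> P^-1 + Q^-1 = 1 ->
  \sum_j h j * a j * b j <=
  (\sum_j h j * a j `^ P) `^ P^-1 * (\sum_j h j * b j `^ Q) `^ Q^-1.
Proof.
move=> h0 a0 b0 P0 Q0 PQ.
set Sa := \sum_j h j * a j `^ P; set Sb := \sum_j h j * b j `^ Q.
have Sa0 : 0 <= Sa by apply: sumr_ge0 => j _; rewrite mulr_ge0 ?powR_ge0.
have Sb0 : 0 <= Sb by apply: sumr_ge0 => j _; rewrite mulr_ge0 ?powR_ge0.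
move: Sa0; rewrite le_eqVlt => /orP[/eqP Sa0|Sap].
  rewrite -Sa0 powR0 ?invr_eq0 ?gt_eqF // mul0r le_eqVlt; apply/orP; left.
  apply/eqP; apply: big1 => j _.
  have Hj : h j * a j `^ P = 0.
    by apply: (psumr_eq0P _ (esym Sa0)) => // i _; rewrite mulr_ge0 ?powR_ge0.
  move: Hj => /eqP; rewrite mulf_eq0 => /orP[/eqP ->|/eqP/powR_eq0_eq0 ->]; first by rewrite !mul0r.
  by rewrite mulr0 mul0r.
move: Sb0; rewrite le_eqVlt => /orP[/eqP Sb0|Sbp].
  rewrite -Sb0 [0 `^ Q^-1]powR0 ?invr_eq0 ?gt_eqF // mulr0 le_eqVlt; apply/orP; left.
  apply/eqP; apply: big1 => j _.
  have Hj : h j * b j `^ Q = 0.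
    by apply: (psumr_eq0P _ (esym Sb0)) => // i _; rewrite mulr_ge0 ?powR_ge0.
  move: Hj => /eqP; rewrite mulf_eq0 => /orP[/eqP ->|/eqP/powR_eq0_eq0 ->]; first by rewrite !mul0r.
  by rewrite mulr0.
set A := Sa `^ P^-1; set B := Sb `^ Q^-1.
have A0 : 0 < A by rewrite powR_gt0.
have B0 : 0 < B by rewrite powR_gt0.
have AP : A `^ P = Sa by rewrite powR_inv_pow // ltW.
have BQ : B `^ Q = Sb by rewrite powR_inv_pow // ltW.
clearbody A B.
apply: le_trans (_ : \sum_j A * B * (h j * a j `^ P / (P * Sa) + h j * b j `^ Q / (Q * Sb)) <= _).
  apply: ler_sum => j _.
  have := conjugate_powR (divr_ge0 (a0 j) (ltW A0)) (divr_ge0 (b0 j) (ltW B0)) P0 Q0 PQ.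
  rewrite !powR_div // ?AP ?BQ => Y.
  have -> : h j * a j * b j = A * B * h j * ((a j / A) * (b j / B)).
    by field; rewrite !gt_eqF.
  rewrite -mulrA; apply: ler_wpM2l; first by rewrite mulr_ge0 // ltW.
  apply: le_trans (ler_wpM2l (h0 j) Y) _.
  rewrite le_eqVlt; apply/orP; left; apply/eqP; field.
  by rewrite !gt_eqF.
rewrite -mulr_sumr big_split /= -!mulr_suml.
rewrite -/Sa -/Sb.
have -> : Sa / (P * Sa) + Sb / (Q * Sb) = 1.
  by rewrite -PQ; field; rewrite !gt_eqF.
by rewrite mulr1.
Qed.
Lemma plap_sq {R : realType} {I : finType} (h : I -> R) (p : R) (K : I -> I -> R)
  (u : I -> R) (BK : R) : 1 < p ->
  (forall i, 0 <= h i) -> \sum_i h i = 1 ->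
  (forall i j, 0 <= K i j) -> (forall i j, K i j = K j i) ->
  0 <= BK -> (forall i, \sum_j h j * K i j <= BK) ->
  \sum_i h i * (plap h p K u i) ^+ 2 <=
  BK * (BK + 2 * 2 `^ qexp p * BK * \sum_i h i * `|u i| `^ qexp p).
Proof.
move=> p1 h0 h1 K0 Ksym BK0 kB.
set q := qexp p; set c := 2 `^ q.
have q2 : 2 <= q by apply: qexp_ge2.
have c0 : 0 <= c by apply: powR_ge0.
set E := \sum_i h i * `|u i| `^ q.
have w0 : forall i j, 0 <= h j * K i j by move=> i j; apply: mulr_ge0.
have pt : forall i, (plap h p K u i) ^+ 2 <=
    BK * \sum_j h j * K i j * (1 + c * `|u j| `^ q + c * `|u i| `^ q).
  move=> i.
  set a := fun j => `|u j - u i| `^ (p - 1).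
  have H1 : `|plap h p K u i| <= \sum_j h j * K i j * a j.
    rewrite /plap normrN; apply: le_trans (ler_norm_sum _ _ _) _.
    apply: ler_sum => j _; rewrite normrM ger0_norm // norm_Psi //.
  have H2 : (plap h p K u i) ^+ 2 <= (\sum_j h j * K i j * a j) ^+ 2.
    rewrite -real_normK ?num_real //.
    have := normr_ge0 (plap h p K u i); move: H1; set X := `|_|; set Y := \sum_j _.
    move=> ? ?; nra.
  apply: le_trans H2 _; apply: le_trans (cauchy_schwarz _ _ (w0 i)) _.
  have H3 : \sum_j h j * K i j * a j ^+ 2 <=
      \sum_j h j * K i j * (1 + c * `|u j| `^ q + c * `|u i| `^ q).
    apply: ler_sum => j _; apply: ler_wpM2l => //.
    apply: le_trans (pow_bound _ _ p1 (normr_ge0 _)) _.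
    rewrite -addrA lerD2l -mulrDr -/q; apply: diff_pow; exact: le_trans _ q2.
  have H4 : 0 <= \sum_j h j * K i j * a j ^+ 2.
    by apply: sumr_ge0 => j _; rewrite mulr_ge0 ?sqr_ge0.
  apply: le_trans (ler_wpM2l (sumr_ge0 _ (fun j _ => w0 i j)) H3) _.
  apply: ler_wpM2r => //; apply: le_trans H4 H3.
apply: le_trans (_ : \sum_i h i * (BK * \sum_j h j * K i j *
    (1 + c * `|u j| `^ q + c * `|u i| `^ q)) <= _).
  by apply: ler_sum => i _; apply: ler_wpM2l.
have E1 : \sum_i h i * (\sum_j h j * K i j) <= BK.
  rewrite -[X in _ <= X]mulr1 -h1 mulr_sumr; apply: ler_sum => i _.
  by rewrite mulrC ler_wpM2r.
have E2 : \sum_i h i * (\sum_j h j * K i j * `|u i| `^ q) <= BK * E.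
  rewrite /E mulr_sumr; apply: ler_sum => i _.
  rewrite -mulr_suml mulrCA; apply: ler_wpM2r => //.
  by rewrite mulr_ge0 ?powR_ge0.
have E3 : \sum_i h i * (\sum_j h j * K i j * `|u j| `^ q) <= BK * E.
  have -> : \sum_i h i * (\sum_j h j * K i j * `|u j| `^ q) =
      \sum_i h i * (\sum_j h j * K i j * `|u i| `^ q).
    under eq_bigr do rewrite mulr_sumr.
    rewrite exchange_big /=; apply: eq_bigr => i _.
    rewrite mulr_sumr; apply: eq_bigr => j _; rewrite (Ksym i j); ring.
  exact: E2.
pose a1 := fun i => \sum_j h j * K i j.
pose b1 := fun i => \sum_j h j * K i j * `|u j| `^ q.
pose d1 := fun i => \sum_j h j * K i j * `|u i| `^ q.
have Ei : forall i, \sum_j h j * K i j * (1 + c * `|u j| `^ q + c * `|u i| `^ q)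
    = a1 i + c * b1 i + c * d1 i.
  move=> i; rewrite /a1 /b1 /d1 !mulr_sumr -!big_split /=.
  by apply: eq_bigr => j _; ring.
under eq_bigr do rewrite Ei.
have -> : \sum_i h i * (BK * (a1 i + c * b1 i + c * d1 i)) =
  BK * (\sum_i h i * a1 i + c * \sum_i h i * b1 i + c * \sum_i h i * d1 i).
  rewrite !mulr_sumr -!big_split /= mulr_sumr; apply: eq_bigr => i _; ring.
rewrite /a1 /b1 /d1.
apply: ler_wpM2l => //.
have : c * \sum_i h i * (\sum_j h j * K i j * `|u j| `^ q) <= c * (BK * E).
  exact: ler_wpM2l.
have : c * \sum_i h i * (\sum_j h j * K i j * `|u i| `^ q) <= c * (BK * E).
  exact: ler_wpM2l.
move: E1; clearbody E c; move=> ? ? ?; nra.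
Qed.
Lemma mono_plap {R : realType} {I : finType} (h : I -> R) (p q : R) (K : I -> I -> R)
  (u : I -> R) : 1 < p -> 1 < q ->
  (forall i, 0 <= h i) -> (forall i j, 0 <= K i j) -> (forall i j, K i j = K j i) ->
  \sum_i h i * Psi q (u i) * (- plap h p K u i) <= 0.
Proof.
move=> p1 q1 h0 K0 Ksym.
pose G := fun i j => h i * h j * K i j * Psi q (u i) * Psi p (u j - u i).
have -> : \sum_i h i * Psi q (u i) * (- plap h p K u i) = \sum_i \sum_j G i j.
  apply: eq_bigr => i _; rewrite /plap opprK mulr_sumr; apply: eq_bigr => j _.
  by rewrite /G; ring.
have S2 : \sum_i \sum_j G i j = \sum_i \sum_j G j i by rewrite exchange_big.
suff : \sum_i \sum_j G i j + \sum_i \sum_j G i j <= 0 by lra.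
rewrite {2}S2 -big_split /=; apply: sumr_le0 => i _.
rewrite -big_split /=; apply: sumr_le0 => j _.
rewrite /G Ksym -[u i - u j]opprB PsiN.
have -> : h i * h j * K j i * Psi q (u i) * Psi p (u j - u i) +
  h j * h i * K j i * Psi q (u j) * - Psi p (u j - u i) =
  h i * h j * K j i * ((Psi q (u i) - Psi q (u j)) * Psi p (u j - u i)) by ring.
apply: mulr_ge0_le0; first by rewrite !mulr_ge0.
exact: Psi_cross.
Qed.

Lemma step_Lq {R : realType} {I : finType} (h : I -> R) (p q : R) (K : I -> I -> R)
  (uk um f : I -> R) (tau : R) : 1 < p -> 1 < q ->
  (forall i, 0 <= h i) -> (forall i j, 0 <= K i j) -> (forall i j, K i j = K j i) ->
  0 <= tau ->
  (forall i, uk i = um i + tau * (- plap h p K uk i + f i)) ->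
  Lnorm_n h q uk <= Lnorm_n h q um + tau * Lnorm_n h q f.
Proof.
move=> p1 q1 h0 K0 Ksym tau0 heq.
pose P := q / (q - 1).
have q10 : 0 < q - 1 by lra.
have P0 : 0 < P by rewrite divr_gt0 // ; lra.
have PQ : P^-1 + q^-1 = 1 by rewrite /P invf_div; field; rewrite ?gt_eqF //; lra.
have Pdef : P = q / (q - 1) by [].
clearbody P.
pose E := \sum_i h i * `|uk i| `^ q.
have LE : Lnorm_n h q uk = E `^ q^-1 by [].
have E0 : 0 <= E by apply: sumr_ge0 => i _; rewrite mulr_ge0 ?powR_ge0.
have Lm0 : 0 <= Lnorm_n h q um by apply: powR_ge0.
have Lf0 : 0 <= Lnorm_n h q f by apply: powR_ge0.
have RHS0 : 0 <= Lnorm_n h q um + tau * Lnorm_n h q f := addr_ge0 Lm0 (mulr_ge0 tau0 Lf0).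
have E1 : E = \sum_i h i * Psi q (uk i) * um i
            + tau * \sum_i h i * Psi q (uk i) * (- plap h p K uk i)
            + tau * \sum_i h i * Psi q (uk i) * f i.
  rewrite /E !mulr_sumr -!big_split /=; apply: eq_bigr => i _.
  rewrite -(Psi_self _ _ q1); have := heq i.
  move: (uk i) (Psi q (uk i)) (plap h p K uk i) => x a b ->; ring.
have M := mono_plap h p q K uk p1 q1 h0 K0 Ksym.
have Hb : forall v : I -> R, \sum_i h i * Psi q (uk i) * v i <=
    \sum_i h i * (`|uk i| `^ (q - 1)) * `|v i|.
  move=> v; apply: ler_sum => i _; rewrite -mulrA -mulrA ler_wpM2l //.
  by rewrite -norm_Psi // -normrM ler_norm.
have Hh : forall v : I -> R, \sum_i h i * (`|uk i| `^ (q - 1)) * `|v i| <=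
    E `^ P^-1 * Lnorm_n h q v.
  move=> v; apply: le_trans (hoelder_fin h (fun i => `|uk i| `^ (q - 1)) (fun i => `|v i|) P q h0 _ _ P0 _ PQ) _.
  - by move=> i; exact: powR_ge0.
  - by move=> i; exact: normr_ge0.
  - exact: lt_trans ltr01 q1.
  have HE : \sum_i h i * (`|uk i| `^ (q - 1)) `^ P = E.
    rewrite /E; apply: eq_bigr => i _; rewrite -powRrM.
    have -> : (q - 1) * P = q by rewrite Pdef; field; rewrite gt_eqF.
    by [].
  by rewrite HE.
have key : E <= E `^ P^-1 * (Lnorm_n h q um + tau * Lnorm_n h q f).
  rewrite {1}E1 mulrDr; apply: lerD.
    apply: le_trans (_ : \sum_i h i * Psi q (uk i) * um i + 0 <= _).
      by rewrite lerD2l; apply: mulr_ge0_le0.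
    by rewrite addr0; apply: le_trans (Hb um) (Hh um).
  rewrite mulrCA; apply: ler_wpM2l => //; exact: le_trans (Hb f) (Hh f).
rewrite LE.
have q0 : 0 < q := lt_trans ltr01 q1.
case: (eqVneq E 0) => [E0'|En].
  rewrite E0' powR0; first exact: RHS0.
  by rewrite invr_eq0 (gt_eqF q0).
have EE : E = E `^ q^-1 * E `^ P^-1.
  rewrite -powRD; last by apply/implyP => _; exact: En.
  by rewrite addrC PQ (powRr1 E0).
rewrite {1}EE mulrC in key.
have X0 : 0 < E `^ P^-1 by apply: powR_gt0; rewrite lt_def En E0.
by rewrite -(ler_pM2l X0).
Qed.
Local Open Scope classical_set_scope.

Definition Aset {R : realType} (t : nat -> R) (k : nat) : set R :=
  [set` Interval (if k == 0%N then BLeft (t 0%N) else BRight (t k)) (BRight (t k.+1))].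

Lemma Aset_mem {R : realType} (t : nat -> R) (k : nat) (s : R) :
  Aset t k s <-> (t k <= s <= t k.+1 /\ (k = 0%N \/ t k < s)).
Proof.
rewrite /Aset /=; case: eqP => [->|kn0] /=; rewrite in_itv /=.
  by split => [/andP[-> ->]|[/andP[-> ->] _]]; [split => //; left|].
split => [/andP[a b]|[/andP[a b] [//|c]]]; last by rewrite c b.
by rewrite b (ltW a); split => //; right.
Qed.

Lemma Aset_kidx {R : realType} (t : nat -> R) (N k : nat) (s : R) :
  (forall k, (k < N)%N -> t k < t k.+1) -> (k < N)%N -> Aset t k s ->
  kidx t N s = k.+1.
Proof.
move=> ht kN /Aset_mem [H1 H2]; apply: kidx_itv => //=.
by case: H2 => [->|]; [left|right].
Qed.

Lemma step_indic {R : realType} (t : nat -> R) (N : nat) (b : nat -> R) (s : R) :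
  (forall k, (k < N)%N -> t k < t k.+1) -> (0 < N)%N -> t 0%N = 0 ->
  0 <= s <= t N ->
  b (kidx t N s) = \sum_(k < N) b k.+1 * \1_(Aset t k) s.
Proof.
move=> ht N0 t0 sT.
have [k0 [/andP[k01 k0N] sk hk]] := kidx_ex s ht N0 t0 sT.
have kid := kidx_itv k0 s ht (introT andP (conj k01 k0N)) sk hk.
have k0N' : (k0.-1 < N)%N by rewrite prednK.
have Ak0 : Aset t k0.-1 s.
  apply/Aset_mem; rewrite prednK //; split => //.
  by case: hk => [->|]; [left|right].
rewrite (bigD1 (Ordinal k0N')) //= indicE.
rewrite (_ : s \in Aset t k0.-1 = true); last by apply/asboolP.
rewrite mulr1 big1 ?addr0; first by rewrite kid prednK.
move=> k /negP kne; rewrite indicE.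
case: (boolP (s \in Aset t k)) => [/set_mem Ak|_]; last by rewrite mulr0.
exfalso; apply: kne; apply/eqP/val_inj => /=.
have := Aset_kidx _ _ _ _ ht (ltn_ord k) Ak; rewrite kid => ->; by [].
Qed.
Local Open Scope classical_set_scope.
Lemma int_step {R : realType} (t : nat -> R) (N : nat) (b : nat -> R) :
  (forall k, (k < N)%N -> t k < t k.+1) -> (0 < N)%N -> t 0%N = 0 ->
  (forall k, 0 <= b k) ->
  (\int[@lebesgue_measure R]_(s in `[0%R, t N]) (b (kidx t N s))%:E =
   (\sum_(k < N) b k.+1 * (t k.+1 - t k))%:E)%E.
Proof.
move=> ht N0 t0 b0.
have mD : measurable (`[0%R, t N] : set R) by exact: measurable_itv.
have mA : forall k, measurable (Aset t k) by move=> k; exact: measurable_itv.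
have -> : (\int[@lebesgue_measure R]_(s in `[0%R, t N]) (b (kidx t N s))%:E =
   \int[@lebesgue_measure R]_(s in `[0%R, t N]) (\sum_(k < N) (b k.+1 * \1_(Aset t k) s)%:E))%E.
  apply: eq_integral => s; rewrite inE /= in_itv /= => sT.
  by rewrite sumEFin (step_indic _ _ b s ht N0 t0 sT).
rewrite ge0_integral_sum //; last 2 first.
- move=> k; apply/measurable_realfun.measurable_EFinP; apply: measurable_realfun.measurable_funM; first exact: measurable_cst.
  exact: (measurable_realfun.measurable_indic (mA k)).
- by move=> k s _; rewrite lee_fin mulr_ge0 // indicE.
rewrite -sumEFin; apply: eq_bigr => k _.
under eq_integral do rewrite EFinM.
rewrite ge0_integralZl_EFin; last 4 first.
- exact: mD.
- by move=> s _; rewrite lee_fin indicE.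
- apply/measurable_realfun.measurable_EFinP; exact: (measurable_realfun.measurable_indic (mA k)).
- exact: b0.
rewrite integral_indic //. rewrite setIidl; last first.
  move=> s /Aset_mem [/andP[s1 s2] _]; rewrite /= in_itv /=; apply/andP; split.
    by apply: le_trans _ s1; rewrite -t0; exact: (tmonoW ht 0 k (leq0n _) (ltnW (ltn_ord k))).
  by apply: le_trans s2 _; exact: (tmonoW ht k.+1 N (ltn_ord k) (leqnn _)).
rewrite EFinM; congr (_ * _)%E.
apply: eq_trans (lebesgue_measure_itv _) _.
have tk : t k < t k.+1 := ht k (ltn_ord k).
case: eqP => [k0|_] /=.
  by rewrite k0 in tk *; rewrite lte_fin tk EFinB.
by rewrite lte_fin tk EFinB.
exact: mA.
Qed.
Local Close Scope classical_set_scope.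
Lemma Lnorm2E {R : realType} {I : finType} (h : I -> R) (v : I -> R) :
  (forall i, 0 <= h i) ->
  Lnorm_n h 2 v = Num.sqrt (\sum_i h i * v i ^+ 2).
Proof.
move=> h0; rewrite /Lnorm_n.
have -> : \sum_i h i * `|v i| `^ 2 = \sum_i h i * v i ^+ 2.
  apply: eq_bigr => i _; rewrite (powR_mulrn 2 (normr_ge0 (v i))).
  by rewrite real_normK ?num_real.
rewrite powR12_sqrt //.
by apply: sumr_ge0 => i _; rewrite mulr_ge0 ?sqr_ge0.
Qed.

Lemma Lnorm2_sq {R : realType} {I : finType} (h : I -> R) (v : I -> R) :
  (forall i, 0 <= h i) ->
  Lnorm_n h 2 v ^+ 2 = \sum_i h i * v i ^+ 2.
Proof.
move=> h0; rewrite Lnorm2E // sqr_sqrtr //.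
by apply: sumr_ge0 => i _; rewrite mulr_ge0 ?sqr_ge0.
Qed.
Lemma f_L2 {R : realType} {I : finType} (h : I -> R) (f : nat -> I -> R)
  (t : nat -> R) (N : nat) (T Bf : R) :
  (forall i, 0 <= h i) ->
  (forall k, (k < N)%N -> t k < t k.+1) -> (0 < N)%N -> t 0%N = 0 -> t N = T ->
  (BVnorm h T (tbar f t N) <= Bf%:E)%E ->
  forall k, (1 <= k <= N)%N -> \sum_i h i * f k i ^+ 2 <= 2 * Bf ^+ 2.
Proof.
move=> h0 ht N0 t0 tN hBV k /andP[k1 kN].
have F0 : tbar f t N 0 = f 1%N.
  rewrite /tbar (kidx_itv 1 0 ht); first by [].
  - exact: N0.
  - by rewrite /= t0 lexx /=; apply: ltW; rewrite -t0; exact: ht.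
  - by left.
have tk0 : 0 < t k by rewrite -t0; exact: (tmono ht 0 k k1 kN).
have Fk : tbar f t N (t k) = f k.
  rewrite /tbar (kidx_itv k (t k) ht); first by [].
  - by rewrite k1 kN.
  - rewrite lexx andbT; apply: (tmonoW ht); [exact: leq_pred | exact: (@leq_trans k)].
  - by right; apply: (tmono ht); [by rewrite prednK // | exact: (@leq_trans k)].
pose L0 := Lnorm_n h 2 (f 1%N).
pose L1 := Lnorm_n h 2 (fun j => f k j - f 1%N j).
have L00 : 0 <= L0 by apply: powR_ge0.
have L10 : 0 <= L1 by apply: powR_ge0.
have V : (L1%:E <= Var2 h T (tbar f t N))%E.
  apply: ereal_sup_ubound; exists 1%N, (fun i => if i == 0%N then 0 else t k); split.
  - exact: lexx.
  - by move=> i; rewrite ltnS leqn0 => /eqP -> /=; exact: tk0.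
  - by rewrite /= -tN; exact: (tmonoW ht k N kN (leqnn _)).
  - rewrite big_nat1 /= Fk F0; by [].
have LL : L0 + L1 <= Bf.
  rewrite -lee_fin EFinD; apply: le_trans hBV; rewrite /BVnorm F0.
  exact: leeD2l.
have E0 : L0 ^+ 2 = \sum_i h i * f 1%N i ^+ 2 by apply: Lnorm2_sq.
have E1 : L1 ^+ 2 = \sum_i h i * (f k i - f 1%N i) ^+ 2 by apply: Lnorm2_sq.
clearbody L0 L1.
apply: le_trans (_ : 2 * (L0 ^+ 2 + L1 ^+ 2) <= _); last first.
  move: E0 E1 => _ _.
  have S0 : 0 <= L0 + L1 := addr_ge0 L00 L10.
  have H1 : (L0 + L1) ^+ 2 <= Bf ^+ 2.
    rewrite !expr2; exact: (ler_pM S0 S0 LL LL).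
  have H2 : 0 <= L0 * L1 := mulr_ge0 L00 L10.
  clear -H1 H2; nra.
rewrite E0 E1 mulrDr !mulr_sumr -big_split /=; apply: ler_sum => i _.
have := h0 i; move: (h i) (f k i) (f 1%N i) => a x y a0.
rewrite -subr_ge0.
have -> : 2 * (a * y ^+ 2) + 2 * (a * (x - y) ^+ 2) - a * x ^+ 2 = a * (x - 2 * y) ^+ 2 by ring.
by rewrite mulr_ge0 ?sqr_ge0.
Qed.
Theorem lemma6p14 (R : realType) (p : R) (hp : 1 < p) (BK Bg Bf : R) :
  exists C : R, 0 < C /\
  forall (I : finType) (h : I -> R) (K : I -> I -> R) (g : I -> R)
         (T : R) (N : nat) (t : nat -> R) (f u : nat -> I -> R),
    (forall i, 0 < h i) -> \sum_i h i = 1 ->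
    (forall i j, 0 <= K i j) -> (forall i j, K i j = K j i) ->
    Linf1_n h K <= BK ->
    Lnorm_n h (qexp p) g <= Bg ->
    (0 < N)%N -> t 0%N = 0 -> t N = T ->
    (forall k, (k < N)%N -> t k < t k.+1) ->
    (\int[@lebesgue_measure R]_(s in `[0%R, T]%classic)
        (Lnorm_n h (qexp p) (tbar f t N s))%:E <= Bf%:E)%E ->
    (BVnorm h T (tbar f t N) <= Bf%:E)%E ->
    u 0%N = g ->
    (forall k, (1 <= k <= N)%N -> forall i,
        (u k i - u k.-1 i) / (t k - t k.-1) = - plap h p K (u k) i + f k i) ->
    forall s, 0 <= s <= T ->
      Lnorm_n h 2 (fun i => ttilde u t N s i - tbar u t N s i) <= C * taumax t N.
Proof.
pose q := qexp p.
have q2 : 2 <= q := qexp_ge2 p hp.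
have q1 : 1 < q by apply: lt_le_trans q2; rewrite ltr1n.
have q0 : 0 < q := lt_trans ltr01 q1.
pose A := `|Bg| + `|Bf|.
have A0 : 0 <= A by rewrite addr_ge0 ?normr_ge0.
pose c := 2 `^ q.
have c0 : 0 <= c := powR_ge0 _ _.
pose P := `|BK| * (`|BK| + 2 * c * `|BK| * A `^ q).
pose D := 2 * (P + 2 * Bf ^+ 2).
have P0 : 0 <= P.
  by rewrite mulr_ge0 ?normr_ge0 // addr_ge0 ?normr_ge0 // !mulr_ge0 ?normr_ge0 ?powR_ge0.
have D0 : 0 <= D by rewrite mulr_ge0 // addr_ge0 // mulr_ge0 // sqr_ge0.
exists (Num.sqrt D + 1); split; first exact: (ltr_pwDr ltr01 (sqrtr_ge0 D)).
move=> I h K g T N t f u hp0 h1 K0 Ksym HK Hg N0 t0 tN ht Hint HBV u0 Heq s Hs.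
have qE : q = qexp p by [].
have cE : c = 2 `^ q by [].
have PE : P = `|BK| * (`|BK| + 2 * c * `|BK| * A `^ q) by [].
have DE : D = 2 * (P + 2 * Bf ^+ 2) by [].
have AE : A = `|Bg| + `|Bf| by [].
clearbody P D c A q.
rewrite -qE in Hint Hg.
have h0 : forall i, 0 <= h i by move=> i; exact: ltW (hp0 i).
have kB : forall i, \sum_j h j * K i j <= `|BK|.
  move=> i; apply: le_trans (ler_norm BK).
  apply: le_trans HK.
  have -> : \sum_j h j * K i j = \sum_j h j * `|K i j|.
    by apply: eq_bigr => j _; rewrite ger0_norm.
  exact: (le_bigmax 0 (fun i => \sum_j h j * `|K i j|) i).
pose b := fun k => Lnorm_n h q (f k).
have b0 : forall k, 0 <= b k by move=> k; exact: powR_ge0.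
have Hsum : \sum_(0 <= k < N) b k.+1 * (t k.+1 - t k) <= Bf.
  rewrite big_mkord -lee_fin -(int_step t N b ht N0 t0 b0) tN; exact: Hint.

have step : forall k, (k < N)%N ->
    Lnorm_n h q (u k.+1) <= Lnorm_n h q (u k) + (t k.+1 - t k) * b k.+1.
  move=> k kN.
  have tk : 0 < t k.+1 - t k by rewrite subr_gt0; exact: ht.
  apply: (step_Lq h p q K (u k.+1) (u k) (f k.+1) (t k.+1 - t k) hp q1 h0 K0 Ksym (ltW tk)).
  move=> i; have := Heq k.+1 kN i; rewrite /= => E.
  rewrite -E; field; by rewrite (gt_eqF tk).
have abound : forall k, (k <= N)%N ->
    Lnorm_n h q (u k) <= Lnorm_n h q g + \sum_(0 <= j < k) b j.+1 * (t j.+1 - t j).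
  elim => [|k IH] kN.
    by rewrite big_geq // u0 addr0.
  rewrite big_nat_recr //= addrA; apply: le_trans (step k kN) _.
  by rewrite [_ * b _]mulrC; apply: lerD; [exact: IH (ltnW kN) | exact: lexx].
have aA : forall k, (k <= N)%N -> Lnorm_n h q (u k) <= A.
  move=> k kN; apply: le_trans (abound k kN) _.
  have H1 : \sum_(0 <= j < k) b j.+1 * (t j.+1 - t j) <= Bf.
    apply: le_trans Hsum.
    rewrite (big_cat_nat (leq0n k) kN) /= lerDl big_nat_cond.
    apply: sumr_ge0 => j /andP[/andP[_ jN] _]; apply: mulr_ge0; first exact: b0.
    by rewrite subr_ge0 ltW //; exact: ht.
  rewrite AE; apply: lerD; [exact: le_trans Hg (ler_norm Bg) | exact: le_trans H1 (ler_norm Bf)].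
have EA : forall k, (k <= N)%N -> \sum_i h i * `|u k i| `^ q <= A `^ q.
  move=> k kN; have H := aA k kN; rewrite /Lnorm_n in H.
  have := ge0_ler_powR (ltW q0) (powR_ge0 _ _ : _ \in Num.nneg) (A0 : A \in Num.nneg) H.
  rewrite powR_inv_pow //; apply: sumr_ge0 => i _; exact: mulr_ge0 (h0 i) (powR_ge0 _ _).
have PL : forall k, (k <= N)%N -> \sum_i h i * (plap h p K (u k) i) ^+ 2 <= P.
  move=> k kN.
  apply: le_trans (plap_sq h p K (u k) `|BK| hp h0 h1 K0 Ksym (normr_ge0 _) kB) _.
  rewrite PE -qE -cE; apply: ler_wpM2l; first exact: normr_ge0.
  rewrite lerD2l; apply: ler_wpM2l; last exact: EA.
  by rewrite !mulr_ge0 ?normr_ge0.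
have FL := f_L2 h f t N T Bf h0 ht N0 t0 tN HBV.
have sT : 0 <= s <= t N by rewrite tN.
have [k [/andP[k1 kN] sk hk]] := kidx_ex s ht N0 t0 sT.
have kid := kidx_itv k s ht (introT andP (conj k1 kN)) sk hk.
have kN' : (k.-1 < N)%N by rewrite prednK.
have tau0 : 0 < t k - t k.-1.
  rewrite subr_gt0; apply: (tmono ht) => //; by rewrite prednK.
have taum : t k - t k.-1 <= taumax t N.
  have := le_bigmax 0 (fun j : 'I_N => t j.+1 - t j) (Ordinal kN').
  by rewrite /= prednK.
have W : forall i, ttilde u t N s i - tbar u t N s i =
    (t k - s) * (plap h p K (u k) i - f k i).
  move=> i; rewrite /ttilde /tbar kid /=.
  have := Heq k (introT andP (conj k1 kN)) i.
  move: (plap h p K (u k) i) (f k i) (u k i) (u k.-1 i) (t k) (t k.-1) tau0.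
  move=> a b' x y T1 T0 tp E.
  have X : x = y + (T1 - T0) * (- a + b').
    by rewrite -E; field; rewrite (gt_eqF tp).
  rewrite X; field; by rewrite (gt_eqF tp).
case/andP: sk => sk1 sk2.
have ts0 : 0 <= t k - s by rewrite subr_ge0.
have ts : t k - s <= taumax t N.
  apply: le_trans taum; by rewrite lerD2l lerN2.
have tm0 : 0 <= taumax t N := le_trans ts0 ts.
have SW : \sum_i h i * (ttilde u t N s i - tbar u t N s i) ^+ 2 <= taumax t N ^+ 2 * D.
  have -> : \sum_i h i * (ttilde u t N s i - tbar u t N s i) ^+ 2 =
      (t k - s) ^+ 2 * \sum_i h i * (plap h p K (u k) i - f k i) ^+ 2.
    by rewrite mulr_sumr; apply: eq_bigr => i _; rewrite W; ring.
  have S1 : \sum_i h i * (plap h p K (u k) i - f k i) ^+ 2 <=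
      2 * (\sum_i h i * (plap h p K (u k) i) ^+ 2 + \sum_i h i * f k i ^+ 2).
    rewrite mulrDr !mulr_sumr -big_split /=; apply: ler_sum => i _.
    move: (h0 i) (plap h p K (u k) i) (f k i) => a0 x y.
    rewrite -subr_ge0.
    have -> : 2 * (h i * x ^+ 2) + 2 * (h i * y ^+ 2) - h i * (x - y) ^+ 2 =
       h i * (x + y) ^+ 2 by ring.
    by rewrite mulr_ge0 ?sqr_ge0.
  have S2 : 2 * (\sum_i h i * (plap h p K (u k) i) ^+ 2 + \sum_i h i * f k i ^+ 2) <= D.
    rewrite DE; apply: ler_wpM2l; first exact: ler0n.
    apply: lerD; [exact: PL k kN | exact: FL k (introT andP (conj k1 kN))].
  have S3 : (t k - s) ^+ 2 <= taumax t N ^+ 2 by rewrite !expr2; exact: (ler_pM ts0 ts0 ts ts).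
  apply: le_trans (ler_wpM2l (sqr_ge0 _) (le_trans S1 S2)) _.
  by apply: ler_wpM2r.
rewrite Lnorm2E //.
apply: le_trans (_ : Num.sqrt (taumax t N ^+ 2 * D) <= _).
  by rewrite ler_sqrt // mulr_ge0 // sqr_ge0.
rewrite sqrtrM ?sqr_ge0 // sqrtr_sqr (ger0_norm tm0) mulrC.
apply: ler_wpM2r => //; rewrite lerDl; exact: ler01.
Qed.
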